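(* Let $A$ be a unital ring and $n\in\mathbb N$. Then $\operatorname{sr}(A)\le n$ if and only if the skew corner $1_A M_n(A)=1_AM_n(A)(n\cdot 1_A)$ has stable rank $1$ (in the sense of skew corners).
   Context: For idempotents $p,q$ in a unital ring $R$, the skew corner $pRq$ has (right) stable rank $1$, written $\operatorname{sr}(pRq)=1$, if whenever $a\in pRq$, $x\in qRp$, $b\in pRp$ satisfy $ax+b=p$, there exist $y\in pRq$, $z\in qRp$ with $(a+by)z=p$. $M_n(A)$ is identified with the upper left $n\times n$ corner of $M_{n+m}(A)$; in particular $A=M_1(A)$ sits in $M_n(A)$ as the corner at the matrix unit $e_{11}$, so $1_A=e_{11}$, and $n\cdot 1_A=\mathrm{diag}(1,\dots,1)$ is the identity of $M_n(A)$. The (Bass) stable rank $\operatorname{sr}(A)$ is the least positive integer $n$ such that for every $(a_1,\dots,a_n,b)\in A^{n+1}$ with $\sum a_iA+bA=A$ there exist $c_i\in A$ with $\sum_i (a_i+bc_i)A=A$, or $\infty$ if none exists. *)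

(* Defs.v *)
From HB Require Import structures.
From mathcomp Require Import all_boot all_algebra.
Set Implicit Arguments. Unset Strict Implicit. Unset Printing Implicit Defensive.
Import GRing.Theory.
Local Open Scope ring_scope.

Definition in_corner (R : pzRingType) (p q a : R) : Prop :=
  exists r : R, a = p * r * q.

Definition skew_corner_sr1 (R : pzRingType) (p q : R) : Prop :=
  forall a x b : R,
    in_corner p q a -> in_corner q p x -> in_corner p p b ->
    a * x + b = p ->
    exists y z : R, [/\ in_corner p q y, in_corner q p z & (a + b * y) * z = p].

Definition bass_cond (A : pzRingType) (n : nat) : Prop :=
  forall (a : 'I_n -> A) (b : A),
    (exists (r : 'I_n -> A) (s : A), \sum_(i < n) a i * r i + b * s = 1) ->
    exists c : 'I_n -> A,
      exists t : 'I_n -> A, \sum_(i < n) (a i + b * c i) * t i = 1.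

(* sr(A) <= n : the least positive m satisfying bass_cond is <= n
   (sr(A) = oo if none exists). *)
Definition stable_rank_le (A : pzRingType) (n : nat) : Prop :=
  exists m : nat, [/\ (0 < m)%N, (m <= n)%N & bass_cond A m].

(* 1_A = e_11 inside M_n(A) (index 0 is the first one). *)
Definition e11 (A : pzRingType) (n : nat) : 'M[A]_n :=
  \matrix_(i < n, j < n) ((i == j) && (val i == 0%N))%:R.

(* Main.v *)
Require Import Defs.
From mathcomp Require Import all_boot all_algebra.
Set Implicit Arguments. Unset Strict Implicit. Unset Printing Implicit Defensive.
Import GRing.Theory.
Local Open Scope ring_scope.

Lemma bass_succ (A : pzRingType) m : bass_cond A m -> bass_cond A m.+1.
Proof.
move=> Hm a b [r [s Hrs]].
rewrite big_ord_recr /= -addrA in Hrs.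
pose a' := fun i : 'I_m => a (widen_ord (leqnSn m) i).
pose b' := a ord_max * r ord_max + b * s.
have [c [t Hct]] : exists c : 'I_m -> A, exists t : 'I_m -> A,
   \sum_(i < m) (a' i + b' * c i) * t i = 1.
  apply: Hm; exists (fun i => r (widen_ord (leqnSn m) i)), 1.
  by rewrite mulr1.
have E : \sum_(i < m) (a' i + b' * c i) * t i =
   \sum_(i < m) (a' i + b * (s * c i)) * t i
    + a ord_max * (r ord_max * \sum_(i < m) c i * t i).
  rewrite !mulr_sumr -big_split; apply: eq_bigr => i _.
  rewrite /b' !mulrDl !mulrA /=.
  by rewrite -addrA [X in _ + X]addrC.
exists (fun i => if (insub (val i) : option 'I_m) is Some j then s * c j else 0).
exists (fun i => if (insub (val i) : option 'I_m) is Some j then t j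
                 else r ord_max * \sum_(i < m) c i * t i).
rewrite big_ord_recr /= insubF ?ltnn // mulr0 addr0 -Hct E; congr (_ + _).
apply: eq_bigr => i _.
rewrite insubT /=; first by exact: ltn_ord.
move=> Hi.
have -> : Sub (val i) Hi = i by apply: val_inj.
by [].
Qed.

Lemma bass_mono (A : pzRingType) m k : (m <= k)%N -> bass_cond A m -> bass_cond A k.
Proof.
move=> /subnKC <-; elim: (k - m)%N => [|d IH]; first by rewrite addn0.
by move=> H; rewrite addnS; apply: bass_succ; apply: IH.
Qed.

Section Mx.
Variables (A : pzRingType) (n : nat).
Local Notation P := (e11 A n.+1).

Lemma e11_mull (M : 'M[A]_n.+1) i j :
  (P * M) i j = if val i == 0%N then M ord0 j else 0.
Proof.
rewrite -mulmxE mxE big_ord_recl !mxE /= big1 ?addr0.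
  case Hi: (val i == 0%N).
    by rewrite (_ : i = ord0) ?eqxx ?mul1r //; apply: val_inj; exact/eqP.
  by case: (i == ord0) => /=; rewrite ?Hi ?andbF /= ?mulr0n ?mul0r.
move=> k _; rewrite !mxE.
by case: eqP => [->|_]; rewrite ?eqxx /= ?andbF ?mulr0n ?mul0r.
Qed.

Lemma e11_mulr (M : 'M[A]_n.+1) i j :
  (M * P) i j = if val j == 0%N then M i ord0 else 0.
Proof.
rewrite -mulmxE mxE big_ord_recl !mxE /= big1 ?addr0.
  case Hj: (val j == 0%N).
    by rewrite (_ : j = ord0) ?eqxx ?mulr1 //; apply: val_inj; exact/eqP.
  case: (ord0 =P j) => [Ej|_]; first by rewrite -Ej in Hj.
  by rewrite /= mulr0n mulr0.
move=> k _; rewrite !mxE /=.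
by rewrite andbF ?mulr0n ?mulr0.
Qed.
End Mx.

Lemma mulE (A : pzRingType) n (M N : 'M[A]_n) i j :
  (M * N) i j = \sum_(k < n) M i k * N k j.
Proof. by rewrite -mulmxE mxE. Qed.

Lemma addE (A : pzRingType) n (M N : 'M[A]_n) i j :
  (M + N) i j = M i j + N i j.
Proof. by rewrite mxE. Qed.

Lemma e11E (A : pzRingType) n i j :
  e11 A n i j = ((i == j) && (val i == 0%N))%:R.
Proof. by rewrite mxE. Qed.

Lemma lift0_neq n (k : 'I_n) : (val (lift ord0 k) == 0%N) = false.
Proof. by []. Qed.

Lemma ord0_lift n (k : 'I_n) : (ord0 == lift ord0 k) = false.
Proof. by []. Qed.

Lemma corner_iff (A : pzRingType) n :
  bass_cond A n.+1 <-> skew_corner_sr1 (e11 A n.+1) (1 : 'M[A]_n.+1).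
Proof.
split.
- move=> HB a x b [ra ->] [rx ->] [rb ->] Heq.
  rewrite mulr1 mul1r in Heq *.
  have /matrixP/(_ ord0 ord0) H00 := Heq.
  rewrite /= addE mulE e11E eqxx /= -mulrA e11_mull /= e11_mulr /= ?mulr1n in H00.
  have [c [t Hct]] : exists c : 'I_n.+1 -> A, exists t : 'I_n.+1 -> A,
      \sum_(k < n.+1) (ra ord0 k + rb ord0 ord0 * c k) * t k = 1.
    apply: HB; exists (fun k => rx k ord0), 1; rewrite mulr1 -H00; congr (_ + _).
    by apply: eq_bigr => k _; rewrite e11_mull e11_mulr /=.
  pose Y : 'M[A]_n.+1 := \matrix_(i, j) if val i == 0%N then c j else 0.
  pose Z : 'M[A]_n.+1 := \matrix_(i, j) if val j == 0%N then t i else 0.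
  have PY : e11 A n.+1 * Y = Y.
    by apply/matrixP => i j; rewrite e11_mull !mxE; case: ifP.
  have ZP : Z * e11 A n.+1 = Z.
    by apply/matrixP => i j; rewrite e11_mulr !mxE; case: ifP.
  exists Y, Z; split.
  + by exists Y; rewrite mulr1 PY.
  + by exists Z; rewrite mul1r ZP.
  have -> : e11 A n.+1 * rb * e11 A n.+1 * Y = e11 A n.+1 * (rb * Y).
    by rewrite -!mulrA PY.
  apply/matrixP => i j; rewrite mulE e11E.
  case: (unliftP ord0 i) => [i'|] ->.
    rewrite lift0_neq andbF mulr0n big1 // => k _.
    by rewrite addE !e11_mull lift0_neq addr0 mul0r.
  case: (unliftP ord0 j) => [j'|] ->.
    rewrite ord0_lift /= mulr0n big1 // => k _.
    by rewrite !mxE lift0_neq mulr0.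
  rewrite eqxx /= ?mulr1n -Hct; apply: eq_bigr => k _.
  rewrite addE !e11_mull /= mulE big_ord_recl big1 ?addr0.
    by rewrite !mxE /=.
  by move=> l _; rewrite !mxE lift0_neq mulr0.
- move=> H a b [r [s Hrs]].
  pose Am : 'M[A]_n.+1 := \matrix_(i, j) if val i == 0%N then a j else 0.
  pose X : 'M[A]_n.+1 := \matrix_(i, j) if val j == 0%N then r i else 0.
  pose Bm : 'M[A]_n.+1 :=
    \matrix_(i, j) if (val i == 0%N) && (val j == 0%N) then b * s else 0.
  have h1 : in_corner (e11 A n.+1) 1 Am.
    by exists Am; rewrite mulr1; apply/matrixP => i j; rewrite e11_mull !mxE; case: ifP.
  have h2 : in_corner 1 (e11 A n.+1) X.
    by exists X; rewrite mul1r; apply/matrixP => i j; rewrite e11_mulr !mxE; case: ifP.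
  have h3 : in_corner (e11 A n.+1) (e11 A n.+1) Bm.
    exists Bm; apply/matrixP => i j; rewrite e11_mulr e11_mull !mxE /=.
    by case: (val i == 0%N); case: (val j == 0%N).
  have h4 : Am * X + Bm = e11 A n.+1.
    apply/matrixP => i j; rewrite addE mulE e11E.
    case: (unliftP ord0 i) => [i'|] ->.
      rewrite lift0_neq andbF mulr0n !mxE lift0_neq /= addr0 big1 // => k _.
      by rewrite !mxE lift0_neq mul0r.
    case: (unliftP ord0 j) => [j'|] ->.
      rewrite ord0_lift /= mulr0n !mxE lift0_neq andbF addr0 big1 // => k _.
      by rewrite !mxE lift0_neq mulr0.
    by rewrite eqxx !mxE /= -Hrs; congr (_ + _); apply: eq_bigr => k _; rewrite !mxE.
  have [Y [Z [_ _ HYZ]]] := H Am X Bm h1 h2 h3 h4.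
  have /matrixP/(_ ord0 ord0) E := HYZ.
  rewrite /= mulE e11E eqxx /= ?mulr1n in E.
  exists (fun k => s * Y ord0 k), (fun k => Z k ord0).
  rewrite -E; apply: eq_bigr => k _.
  rewrite addE mulE big_ord_recl big1 ?addr0.
    by rewrite !mxE /= mulrA.
  by move=> l _; rewrite !mxE lift0_neq andbF mul0r.
Qed.

Theorem lemma1 (A : pzRingType) (n : nat) (hn : (0 < n)%N) :
  stable_rank_le A n <-> skew_corner_sr1 (e11 A n) (1 : 'M[A]_n).
Proof.
case: n hn => // n _.
split.
  by move=> [m [m0 mn Hm]]; apply/corner_iff; exact: bass_mono mn Hm.
by move=> /corner_iff H; exists n.+1.
Qed.
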